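(* Let $\mathcal{H}_k$ be a truncated space with orthonormal basis $f_m(z)=(1+b_mz)z^m$, $m\ge0$, where $b_t=0$ for all $t\ge n$; let $U:\mathcal{H}_k\to H^2(\mathbb{D})$ be the unitary with $Uf_m=z^m$ for all $m\ge0$, and let $S_n = UM_zU^*$ be the $n$-shift corresponding to $k$. Let $X$ be a bounded operator on $H^2(\mathbb{D})$. Then $XS_n = S_nX$ if and only if there exists $\varphi=\sum_{m\ge0}\alpha_m z^m \in H^\infty(\mathbb{D})$ such that $X = T_\varphi + N$, where $T_\varphi$ is the analytic Toeplitz operator with symbol $\varphi$ on $H^2(\mathbb{D})$ and $N$ is the operator on $H^2(\mathbb{D})$ whose matrix with respect to $\{z^m\}_{m\ge0}$ has entries \[\langle N z^m, z^j\rangle = \langle \varphi f_m, f_j\rangle_{\mathcal{H}_k} - \alpha_{j-m}\qquad (j,m\ge 0),\] with the convention $\alpha_{l}=0$ for $l<0$. (Explicitly, the columns $m\ge n$ of this matrix vanish, its entries with $j\le m+1$ vanish, and for $0\le m<n$ and $j>n$ the entry equals $(b_m-b_{j-1})\alpha_{j-m-1}$.)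
   Context: Fix $n \ge 1$. $H^2(\mathbb{D})$ is the Hardy space on the open unit disc and $H^\infty(\mathbb{D})$ the bounded analytic functions. A truncated space is a reproducing kernel Hilbert space $\mathcal{H}_k$ of analytic functions on $\mathbb{D}$ (with scalar analytic kernel $k$) such that: $\mathbb{C}[z]\subseteq\mathcal{H}_k$; the multiplication operator $M_z$ is bounded on $\mathcal{H}_k$; and the functions $f_m(z) = (1 + b_m z)z^m$, $m \ge 0$, form an orthonormal basis of $\mathcal{H}_k$, for scalars $\{b_m\}$ with $b_t = 0$ for $t \ge n$. For $\varphi\in H^\infty(\mathbb{D})$, $\varphi f_m\in\mathcal{H}_k$, so the inner products above make sense. *)

(* Defs.v *)
From Stdlib Require Import Reals Arith.
From Coquelicot Require Import Coquelicot.

Open Scope R_scope.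

(** H^2(D) is modelled by Taylor coefficient sequences: g(z) = sum_m g_m z^m,
    so H^2(D) = l^2(N, C) and z^m corresponds to the basis vector [ev m]. *)
Definition seqC := nat -> C.

Definition is_l2 (a : seqC) : Prop := ex_series (fun m => (Cmod (a m)) ^ 2).

Definition l2norm (a : seqC) : R := sqrt (Series (fun m => (Cmod (a m)) ^ 2)).

(** Operators on H^2: maps on coefficient sequences; only their behaviour on
    l^2 is relevant. *)
Definition op := seqC -> seqC.

Definition bounded_op (X : op) : Prop :=
  (forall a, is_l2 a -> is_l2 (X a)) /\
  (forall (a c : seqC) (l : C), is_l2 a -> is_l2 c ->
      X (fun m => Cplus (a m) (Cmult l (c m))) =
      (fun m => Cplus (X a m) (Cmult l (X c m)))) /\
  (exists M : R, forall a, is_l2 a -> l2norm (X a) <= M * l2norm a).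

Definition ev (m : nat) : seqC := fun j => if Nat.eqb j m then RtoC 1 else RtoC 0.

(** Taylor coefficients of f_m(z) = (1 + b_m z) z^m. *)
Definition fpoly (b : seqC) (m : nat) : seqC :=
  fun p => if Nat.eqb p m then RtoC 1
           else if Nat.eqb p (S m) then b m else RtoC 0.

(** U^* : H^2 -> H_k, z^m |-> f_m : the Taylor coefficients of sum_m c_m f_m. *)
Definition Ustar (b : seqC) (c : seqC) : seqC :=
  fun p => match p with
           | O => c O
           | S q => Cplus (c (S q)) (Cmult (b q) (c q))
           end.

(** Coordinates of a function g (given by its Taylor coefficients) in the
    orthonormal basis {f_m} of H_k, i.e. fcoord b g j = <g, f_j>_{H_k}.
    These are the unique c with g = sum_j c_j f_j. *)
Fixpoint fcoord (b g : seqC) (p : nat) : C :=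
  match p with
  | O => g O
  | S q => Cminus (g (S q)) (Cmult (b q) (fcoord b g q))
  end.

Definition Uop (b : seqC) (g : seqC) : seqC := fcoord b g.

Definition Mz (g : seqC) : seqC :=
  fun p => match p with O => RtoC 0 | S q => g q end.

Definition Sshift (b : seqC) : op := fun a => Uop b (Mz (Ustar b a)).

Definition cauchy_prod (alpha g : seqC) : seqC :=
  fun j => sum_n (fun i => Cmult (alpha (j - i)%nat) (g i)) j.

Definition toeplitz (alpha : seqC) : op := fun a => cauchy_prod alpha a.

Definition Hinf (alpha : seqC) : Prop :=
  exists M : R, forall z : C, Cmod z < 1 ->
    exists s : C, is_series (fun m => Cmult (alpha m) (pow_n z m)) s /\ Cmod s <= M.

Definition alpha_idx (alpha : seqC) (j m : nat) : C :=
  if Nat.leb m j then alpha (j - m)%nat else RtoC 0.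

(* Main.v *)
Require Import Defs.
From Stdlib Require Import Reals Arith Lia Lra FunctionalExtensionality.
From Coquelicot Require Import Coquelicot.


Fixpoint rsum (F : nat -> C) (k : nat) : C :=
  match k with O => RtoC 0 | S k => Cplus (rsum F k) (F k) end.

Lemma sum_n_rsum (F : nat -> C) j : sum_n F j = rsum F (S j).
Proof.
  induction j; simpl.
  - rewrite sum_O. ring.
  - rewrite sum_Sn, IHj. simpl. reflexivity.
Qed.

Lemma rsum_ext (F G : nat -> C) k : (forall i, (i < k)%nat -> F i = G i) -> rsum F k = rsum G k.
Proof.
  induction k; intros H; simpl; auto.
  rewrite IHk by (intros; apply H; lia). rewrite H by lia. reflexivity.
Qed.

Lemma rsum_lin (F G : nat -> C) l k :
  rsum (fun i => Cplus (F i) (Cmult l (G i))) k = Cplus (rsum F k) (Cmult l (rsum G k)).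
Proof. induction k; simpl. ring. rewrite IHk. ring. Qed.

Lemma rsum_shift (F : nat -> C) k : rsum F (S k) = Cplus (F O) (rsum (fun i => F (S i)) k).
Proof. induction k; simpl in *. ring. rewrite IHk. ring. Qed.

Lemma rsum_ev (F : nat -> C) m k :
  rsum (fun i => Cmult (F i) (ev m i)) k = if Nat.ltb m k then F m else RtoC 0.
Proof.
  induction k; simpl. reflexivity.
  rewrite IHk. unfold ev.
  destruct (Nat.ltb m k) eqn:E1; destruct (Nat.ltb m (S k)) eqn:E2;
  destruct (Nat.eqb k m) eqn:E3;
  apply Nat.ltb_lt in E1 || apply Nat.ltb_ge in E1;
  apply Nat.ltb_lt in E2 || apply Nat.ltb_ge in E2;
  apply Nat.eqb_eq in E3 || apply Nat.eqb_neq in E3; try lia; subst; ring.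
Qed.

Lemma rsum_zero_tail (F : nat -> C) n K :
  (forall m, (n <= m)%nat -> F m = RtoC 0) -> (n <= K)%nat -> rsum F K = rsum F n.
Proof.
  intros H HK. induction HK; auto. simpl. rewrite IHHK, H by lia. ring.
Qed.

Section Alg.
Variable b : nat -> C.

Lemma fcoord_Ustar c : fcoord b (Ustar b c) = c.
Proof.
  apply functional_extensionality. intro p. induction p; simpl; auto.
  rewrite IHp. unfold Cminus. ring.
Qed.

Lemma Ustar_fcoord g : Ustar b (fcoord b g) = g.
Proof.
  apply functional_extensionality. intro p. destruct p; simpl; auto.
  unfold Cminus. ring.
Qed.

Lemma fcoord_lin g h l q :
  fcoord b (fun p => Cplus (g p) (Cmult l (h p))) q = Cplus (fcoord b g q) (Cmult l (fcoord b h q)).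
Proof. induction q; simpl; auto. rewrite IHq. unfold Cminus. ring. Qed.

Lemma Ustar_lin g h l q :
  Ustar b (fun p => Cplus (g p) (Cmult l (h p))) q = Cplus (Ustar b g q) (Cmult l (Ustar b h q)).
Proof. destruct q; simpl; auto. ring. Qed.

Lemma Mz_lin g h l q :
  Mz (fun p => Cplus (g p) (Cmult l (h p))) q = Cplus (Mz g q) (Cmult l (Mz h q)).
Proof. destruct q; simpl; auto. ring. Qed.

Lemma cauchy_lin alpha g h l j :
  cauchy_prod alpha (fun p => Cplus (g p) (Cmult l (h p))) j
  = Cplus (cauchy_prod alpha g j) (Cmult l (cauchy_prod alpha h j)).
Proof.
  unfold cauchy_prod. rewrite !sum_n_rsum. rewrite <- rsum_lin.
  apply rsum_ext. intros. ring.
Qed.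

Lemma cauchy_ev alpha m j : cauchy_prod alpha (ev m) j = alpha_idx alpha j m.
Proof.
  unfold cauchy_prod. rewrite sum_n_rsum.
  rewrite (rsum_ev (fun i => alpha (j - i)%nat)). unfold alpha_idx.
  destruct (Nat.ltb m (S j)) eqn:E1; destruct (Nat.leb m j) eqn:E2;
  apply Nat.ltb_lt in E1 || apply Nat.ltb_ge in E1;
  apply Nat.leb_le in E2 || apply Nat.leb_gt in E2; try lia; reflexivity.
Qed.

Lemma cauchy_Mz alpha g j : cauchy_prod alpha (Mz g) j = Mz (cauchy_prod alpha g) j.
Proof.
  unfold cauchy_prod. destruct j.
  - rewrite sum_n_rsum. simpl. ring.
  - change (Mz (fun j0 => sum_n (fun i => Cmult (alpha (j0 - i)%nat) (g i)) j0) (S j))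
      with (sum_n (fun i => Cmult (alpha (j - i)%nat) (g i)) j).
    rewrite !sum_n_rsum. rewrite (rsum_shift _ (S j)).
    replace (Cmult (alpha (S j - O)%nat) (Mz g O)) with (RtoC 0) by (simpl; ring).
    rewrite Cplus_0_l. apply rsum_ext. intros. reflexivity.
Qed.

Lemma Ustar_ev m : Ustar b (ev m) = fpoly b m.
Proof.
  apply functional_extensionality. intro p.
  destruct p as [|p].
  - unfold Ustar, ev, fpoly. destruct (Nat.eqb_spec 0 m); auto.
    destruct (Nat.eqb_spec 0 (S m)); [lia|auto].
  - change (Ustar b (ev m) (S p)) with (Cplus (ev m (S p)) (Cmult (b p) (ev m p))).
    unfold ev, fpoly.
    destruct (Nat.eqb_spec (S p) m); destruct (Nat.eqb_spec p m);
    destruct (Nat.eqb_spec (S p) (S m)); try lia; subst; ring.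
Qed.

Definition Xhat (alpha : seqC) (v : seqC) : seqC :=
  fcoord b (cauchy_prod alpha (Ustar b v)).

Lemma Xhat_lin alpha g h l q :
  Xhat alpha (fun p => Cplus (g p) (Cmult l (h p))) q = Cplus (Xhat alpha g q) (Cmult l (Xhat alpha h q)).
Proof.
  unfold Xhat. rewrite <- fcoord_lin. f_equal. apply functional_extensionality. intro j.
  rewrite <- cauchy_lin. f_equal. apply functional_extensionality. intro p.
  apply Ustar_lin.
Qed.

Lemma Xhat_S alpha v : Xhat alpha (Sshift b v) = Sshift b (Xhat alpha v).
Proof.
  unfold Xhat, Sshift, Uop. rewrite !Ustar_fcoord. f_equal.
  apply functional_extensionality. intro j. apply cauchy_Mz.
Qed.

Definition agree (j : nat) (g h : seqC) := forall i, (i <= j)%nat -> g i = h i.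

Lemma fcoord_local j g h : agree j g h -> agree j (fcoord b g) (fcoord b h).
Proof.
  induction j; intros H i Hi.
  - assert (i = O) by lia. subst. simpl. apply H. lia.
  - destruct (Nat.eq_dec i (S j)).
    + subst. simpl. rewrite (H (S j)) by lia.
      rewrite (IHj (fun k Hk => H k (le_S _ _ Hk)) j (le_n j)). reflexivity.
    + apply IHj; auto. intros k Hk; apply H; lia. lia.
Qed.

Lemma Ustar_local j g h : agree j g h -> agree j (Ustar b g) (Ustar b h).
Proof.
  intros H i Hi. destruct i; simpl. apply H; lia. rewrite !H by lia. reflexivity.
Qed.

Lemma cauchy_local alpha j g h : agree j g h -> agree j (cauchy_prod alpha g) (cauchy_prod alpha h).
Proof.
  intros H i Hi. unfold cauchy_prod. apply sum_n_ext_loc. intros k Hk. rewrite H by lia. reflexivity.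
Qed.

Lemma Xhat_local alpha j v w : agree j v w -> Xhat alpha v j = Xhat alpha w j.
Proof.
  intros H. unfold Xhat. apply (fcoord_local j); [|lia].
  apply cauchy_local, Ustar_local, H.
Qed.

Lemma toeplitz_local alpha j v w : agree j v w -> toeplitz alpha v j = toeplitz alpha w j.
Proof. intros H. apply (cauchy_local alpha j v w H). lia. Qed.

Definition trunc (K : nat) (w : seqC) : seqC := fun j => rsum (fun m => Cmult (w m) (ev m j)) K.

Lemma trunc_val K w j : trunc K w j = if Nat.ltb j K then w j else RtoC 0.
Proof.
  unfold trunc. induction K; simpl. reflexivity.
  rewrite IHK. unfold ev.
  destruct (Nat.ltb j K) eqn:E1; destruct (Nat.ltb j (S K)) eqn:E2;
  destruct (Nat.eqb j K) eqn:E3;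
  apply Nat.ltb_lt in E1 || apply Nat.ltb_ge in E1;
  apply Nat.ltb_lt in E2 || apply Nat.ltb_ge in E2;
  apply Nat.eqb_eq in E3 || apply Nat.eqb_neq in E3; try lia; subst; ring.
Qed.

Lemma trunc_agree K w j : (j < K)%nat -> agree j (trunc K w) w.
Proof.
  intros H i Hi. rewrite trunc_val. destruct (Nat.ltb i K) eqn:E; auto.
  apply Nat.ltb_ge in E; lia.
Qed.

End Alg.

Definition rl2 (f : nat -> R) := ex_series (fun j => f j ^ 2).

Lemma ex_series_le_R (a b : nat -> R) : (forall n, Rabs (a n) <= b n)%R -> ex_series b -> ex_series a.
Proof. intros H Hb. apply (@ex_series_le R_AbsRing R_CompleteNormedModule a b); auto. Qed.
Lemma ex_series_scal_R (c : R) (a : nat -> R) : ex_series a -> ex_series (fun n => c * a n)%R.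
Proof. intros H. apply (@ex_series_scal R_AbsRing R_NormedModule c a H). Qed.
Lemma ex_series_plus_R (a b : nat -> R) : ex_series a -> ex_series b -> ex_series (fun n => a n + b n)%R.
Proof. intros H1 H2. apply (@ex_series_plus R_AbsRing R_NormedModule a b H1 H2). Qed.

Lemma ex_series_zero : ex_series (fun _ : nat => 0%R).
Proof.
  apply (ex_series_ext (fun n => scal 0%R ((1/2)^n)%R)).
  intros. unfold scal; simpl. unfold mult; simpl. ring.
  apply (@ex_series_scal R_AbsRing R_NormedModule). eexists. apply is_series_geom. rewrite Rabs_right; lra.
Qed.

Lemma rl2_le (f g : nat -> R) c : (forall j, f j ^ 2 <= c * g j ^ 2)%R -> rl2 g -> rl2 f.
Proof.
  intros H Hg. unfold rl2. apply (ex_series_le_R _ (fun j => c * g j ^ 2)%R).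
  - intros j. rewrite Rabs_right.
    apply H. apply Rle_ge, pow2_ge_0.
  - apply ex_series_scal_R, Hg.
Qed.

Lemma rl2_plus (f g : nat -> R) : rl2 f -> rl2 g -> rl2 (fun j => f j + g j)%R.
Proof.
  intros Hf Hg. unfold rl2.
  apply (ex_series_le_R _ (fun j => (2 * f j ^ 2) + (2 * g j ^ 2))%R).
  - intros j. 
    rewrite Rabs_right by (apply Rle_ge, pow2_ge_0).
    pose proof (pow2_ge_0 (f j - g j)); nra.
  - apply ex_series_plus_R; apply ex_series_scal_R; auto.
Qed.

Lemma l2_ext u v : (forall j, u j = v j) -> is_l2 u -> is_l2 v.
Proof. intros H. unfold is_l2. apply ex_series_ext. intros j. rewrite H. reflexivity. Qed.

Lemma l2_le u v c : (forall j, Cmod (u j) <= c * Cmod (v j))%R -> is_l2 v -> is_l2 u.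
Proof.
  intros H Hv. apply (rl2_le (fun j => Cmod (u j)) (fun j => Cmod (v j)) (c^2)%R); [|exact Hv].
  intros j. specialize (H j). pose proof (Cmod_ge_0 (u j)). pose proof (Cmod_ge_0 (v j)).
  nra.
Qed.

Lemma l2_lin u v l : is_l2 u -> is_l2 v -> is_l2 (fun j => Cplus (u j) (Cmult l (v j))).
Proof.
  intros Hu Hv.
  apply (rl2_le (fun j => Cmod (Cplus (u j) (Cmult l (v j)))) (fun j => Cmod (u j) + Cmod l * Cmod (v j))%R 1).
  - intros j. pose proof (Cmod_triangle (u j) (Cmult l (v j))).
    rewrite Cmod_mult in H. pose proof (Cmod_ge_0 (Cplus (u j) (Cmult l (v j)))). nra.
  - apply rl2_plus; auto. apply (rl2_le _ (fun j => Cmod (v j)) (Cmod l ^2)%R); [|exact Hv].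
    intros j. right. ring.
Qed.

Lemma l2_zero_tail u L : (forall j, (L <= j)%nat -> u j = RtoC 0) -> is_l2 u.
Proof.
  intros H. unfold is_l2. apply (ex_series_incr_n _ L).
  apply (ex_series_ext (fun _ => 0%R)); [|apply ex_series_zero].
  intros k. rewrite H by lia. rewrite Cmod_0. simpl. ring.
Qed.

Lemma l2_evtl u v L : (forall j, (L <= j)%nat -> u j = v j) -> is_l2 v -> is_l2 u.
Proof.
  intros H Hv.
  assert (Hd : is_l2 (fun j => Cminus (u j) (v j))).
  { apply (l2_zero_tail _ L). intros j Hj. rewrite H by auto. unfold Cminus. ring. }
  apply (l2_ext (fun j => Cplus (v j) (Cmult (RtoC 1) (Cminus (u j) (v j))))).
  intros. unfold Cminus. ring. apply l2_lin; auto.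
Qed.

Lemma l2_Mz v : is_l2 v -> is_l2 (Mz v).
Proof.
  intros H. unfold is_l2. apply ex_series_incr_1. simpl. exact H.
Qed.

Lemma l2_ev m : is_l2 (ev m).
Proof.
  apply (l2_zero_tail _ (S m)). intros j Hj. unfold ev.
  destruct (Nat.eqb_spec j m); [lia|reflexivity].
Qed.

Lemma l2_trunc K w : is_l2 (trunc K w).
Proof.
  apply (l2_zero_tail _ K). intros j Hj. rewrite trunc_val.
  destruct (Nat.ltb_spec j K); [lia|reflexivity].
Qed.

Definition tail (K : nat) (w : seqC) : seqC := fun j => if Nat.ltb j K then RtoC 0 else w j.

Lemma l2_tail K w : is_l2 w -> is_l2 (tail K w).
Proof.
  apply (l2_evtl _ _ K). intros j Hj. unfold tail. destruct (Nat.ltb_spec j K); [lia|reflexivity].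
Qed.

Lemma trunc_tail K w : w = (fun j => Cplus (trunc K w j) (Cmult (RtoC 1) (tail K w j))).
Proof.
  apply functional_extensionality. intros j. rewrite trunc_val. unfold tail.
  destruct (Nat.ltb j K); ring.
Qed.

Lemma l2norm_ge0 v : (0 <= l2norm v)%R.
Proof. apply sqrt_pos. Qed.

Lemma sum_n_ge_term (f : nat -> R) j : (forall k, 0 <= f k)%R -> (f j <= sum_n f j)%R.
Proof.
  intros H. induction j.
  - rewrite sum_O. lra.
  - rewrite sum_Sn. unfold plus; simpl.
    assert (0 <= sum_n f j)%R.
    { clear IHj. induction j. rewrite sum_O. apply H. rewrite sum_Sn. unfold plus; simpl.
      specialize (H (S j)). lra. }
    lra.
Qed.

Lemma sum_n_incr (f : nat -> R) j : (forall k, 0 <= f k)%R -> (sum_n f j <= sum_n f (S j))%R.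
Proof. intros H. rewrite sum_Sn. unfold plus; simpl. specialize (H (S j)). lra. Qed.

Lemma Series_ge_term (f : nat -> R) j : (forall k, 0 <= f k)%R -> ex_series f -> (f j <= Series f)%R.
Proof.
  intros H He. eapply Rle_trans. apply (sum_n_ge_term f j H).
  apply (is_lim_seq_incr_compare (sum_n f) (Series f)).
  apply Series_correct, He. intros; apply sum_n_incr, H.
Qed.

Lemma Series_ge0 (f : nat -> R) : (forall k, 0 <= f k)%R -> ex_series f -> (0 <= Series f)%R.
Proof. intros H He. eapply Rle_trans. apply (H O). apply Series_ge_term; auto. Qed.

Lemma coord_bound v j : is_l2 v -> (Cmod (v j) <= l2norm v)%R.
Proof.
  intros H. unfold l2norm. rewrite <- (sqrt_pow2 (Cmod (v j))) by apply Cmod_ge_0.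
  apply sqrt_le_1_alt. apply (Series_ge_term (fun m => Cmod (v m) ^ 2)); auto.
  intros; apply pow2_ge_0.
Qed.

Lemma l2norm_bound u (f : nat -> R) c :
  (forall j, Cmod (u j) <= c * f j)%R -> (0 <= c)%R -> (forall j, 0 <= f j)%R -> rl2 f ->
  is_l2 u /\ (l2norm u <= c * sqrt (Series (fun j => f j ^ 2)))%R.
Proof.
  intros H Hc Hf Hr.
  assert (Hle : forall j, (Cmod (u j) ^ 2 <= c^2 * f j ^ 2)%R).
  { intros j. specialize (H j). pose proof (Cmod_ge_0 (u j)). specialize (Hf j). nra. }
  assert (Hu : is_l2 u).
  { apply (rl2_le (fun j => Cmod (u j)) f (c^2)%R); auto. }
  split; auto. unfold l2norm.
  rewrite <- (sqrt_pow2 c) by auto. rewrite <- sqrt_mult by (try apply pow2_ge_0; apply Series_ge0; auto; intros; apply pow2_ge_0).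
  apply sqrt_le_1_alt. rewrite <- Series_scal_l.
  apply Series_le. intros j. split. apply pow2_ge_0. apply Hle.
  apply ex_series_scal_R. exact Hr.
Qed.

Lemma tail_small w : is_l2 w -> forall eps, (0 < eps)%R -> forall K0, exists K, (K0 <= K)%nat /\ (l2norm (tail K w) <= eps)%R.
Proof.
  intros Hw eps He K0.
  set (f := fun m => (Cmod (w m) ^ 2)%R).
  assert (Hc := Series_correct f Hw).
  assert (Hl : is_lim_seq (sum_n f) (Series f)) by exact Hc.
  apply is_lim_seq_spec in Hl.
  destruct (Hl (mkposreal (eps^2) ltac:(apply pow_lt; auto))) as [N HN].
  exists (S (max K0 N)). split. lia.
  unfold l2norm. rewrite <- (sqrt_pow2 eps) by lra. apply sqrt_le_1_alt.
  set (K := S (max K0 N)).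
  rewrite (Series_incr_n_aux _ K).
  2:{ intros k Hk. unfold tail. destruct (Nat.ltb_spec k K); [|lia]. rewrite Cmod_0. simpl. ring. }
  rewrite (Series_ext _ (fun k => f (K + k)%nat)).
  2:{ intros k. unfold tail, f. destruct (Nat.ltb_spec (K + k) K); [lia|reflexivity]. }
  assert (Hs := Series_incr_n f K ltac:(unfold K; lia) Hw).
  specialize (HN (max K0 N) ltac:(lia)). simpl in HN.
  rewrite sum_n_Reals in HN. unfold K in Hs. simpl pred in Hs.
  apply Rabs_lt_between in HN. unfold K. simpl pow. lra.
Qed.

Fixpoint rsumR (F : nat -> R) (k : nat) : R :=
  match k with O => 0%R | S k => (rsumR F k + F k)%R end.

Lemma rsumR_ge0 F k : (forall i, 0 <= F i)%R -> (0 <= rsumR F k)%R.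
Proof. intros H; induction k; simpl. lra. specialize (H k). lra. Qed.

Lemma rsumR_ge_term F k i : (forall i, 0 <= F i)%R -> (i < k)%nat -> (F i <= rsumR F k)%R.
Proof.
  intros H Hi. induction k. lia. simpl. destruct (Nat.eq_dec i k).
  subst. pose proof (rsumR_ge0 F k H). lra.
  assert (F i <= rsumR F k)%R by (apply IHk; lia). specialize (H k). lra.
Qed.

Lemma rl2_rsumR (F : nat -> nat -> R) k : (forall m, rl2 (F m)) -> rl2 (fun j => rsumR (fun m => F m j) k).
Proof.
  intros H. induction k; simpl.
  - unfold rl2. apply (ex_series_ext (fun _ => 0%R)). intros; simpl; ring. apply ex_series_zero.
  - apply (rl2_plus (fun j => rsumR (fun m => F m j) k) (F k)); auto.
Qed.

Lemma zero_of_small x A : (0 <= x)%R -> (0 <= A)%R -> (forall eps, 0 < eps -> x <= A * eps)%R -> x = 0%R.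
Proof.
  intros Hx HA H. destruct (Req_dec x 0); auto.
  assert (0 < x)%R by lra.
  specialize (H (x / (2 * (A + 1)))%R ltac:(apply Rdiv_lt_0_compat; lra)).
  assert (A * (x / (2 * (A + 1))) < x)%R.
  { unfold Rdiv. rewrite <- Rmult_assoc. apply (Rmult_lt_reg_r (2 * (A+1))). lra.
    rewrite Rmult_assoc, Rinv_l by lra. nra. }
  lra.
Qed.

Section Ops.
Variable n : nat.
Variable b : nat -> C.
Hypothesis hb : forall t : nat, (n <= t)%nat -> b t = RtoC 0.

Lemma Bbound : exists B, (0 <= B)%R /\ forall t, (Cmod (b t) <= B)%R.
Proof.
  exists (rsumR (fun t => Cmod (b t)) n). split.
  apply rsumR_ge0. intros; apply Cmod_ge_0.
  intros t. destruct (Nat.lt_ge_cases t n).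
  apply (rsumR_ge_term (fun t => Cmod (b t))); auto. intros; apply Cmod_ge_0.
  rewrite hb by auto. rewrite Cmod_0. apply rsumR_ge0. intros; apply Cmod_ge_0.
Qed.

Lemma Ustar_bound v j : is_l2 v -> exists B, (0 <= B)%R /\ (Cmod (Ustar b v j) <= (1 + B) * l2norm v)%R.
Proof.
  intros Hv. destruct Bbound as [B [HB0 HB]]. exists B. split; auto.
  pose proof (l2norm_ge0 v).
  destruct j; simpl.
  - pose proof (coord_bound v O Hv). nra.
  - eapply Rle_trans. apply Cmod_triangle. rewrite Cmod_mult.
    pose proof (coord_bound v (S j) Hv). pose proof (coord_bound v j Hv).
    pose proof (HB j). pose proof (Cmod_ge_0 (b j)). pose proof (Cmod_ge_0 (v j)). nra.
Qed.

Lemma l2_Ustar v : is_l2 v -> is_l2 (Ustar b v).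
Proof.
  intros Hv. destruct Bbound as [B [HB0 HB]].
  apply (l2_ext (fun j => Cplus (v j) (Cmult (RtoC 1) (Mz (fun p => Cmult (b p) (v p)) j)))).
  - intros j. destruct j; simpl; ring.
  - apply l2_lin; auto. apply l2_Mz. apply (l2_le _ v B); auto.
    intros j. rewrite Cmod_mult. pose proof (HB j). pose proof (Cmod_ge_0 (v j)). nra.
Qed.

Lemma fcoord_big g q : (n <= q)%nat -> fcoord b g (S q) = g (S q).
Proof. intros H. simpl. rewrite hb by auto. unfold Cminus. ring. Qed.

Lemma fcoord_id g : (forall p, (p < n)%nat -> g p = RtoC 0) -> forall q, fcoord b g q = g q.
Proof.
  intros H q. induction q; simpl; auto. rewrite IHq.
  destruct (Nat.lt_ge_cases q n). rewrite (H q) by auto. unfold Cminus; ring.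
  rewrite hb by auto. unfold Cminus; ring.
Qed.

Lemma l2_fcoord g : is_l2 g -> is_l2 (fcoord b g).
Proof.
  apply (l2_evtl _ _ (S n)). intros j Hj. destruct j. lia. apply fcoord_big. lia.
Qed.

Lemma l2_S a : is_l2 a -> is_l2 (Sshift b a).
Proof. intros H. unfold Sshift, Uop. apply l2_fcoord, l2_Mz, l2_Ustar, H. Qed.

Definition plin (Z : op) := forall g h l j,
  Z (fun p => Cplus (g p) (Cmult l (h p))) j = Cplus (Z g j) (Cmult l (Z h j)).
Definition plocal (Z : op) := forall j v w, agree j v w -> Z v j = Z w j.

Lemma plin_zero Z : plin Z -> forall j, Z (fun _ => RtoC 0) j = RtoC 0.
Proof.
  intros H j. assert (E := H (fun _ => RtoC 0) (fun _ => RtoC 0) (Copp (RtoC 1)) j).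
  assert (Ef : (fun p : nat => Cplus (RtoC 0) (Cmult (Copp (RtoC 1)) (RtoC 0))) = (fun _ => RtoC 0)).
  { apply functional_extensionality; intros; ring. }
  cbv beta in E; rewrite Ef in E. 
  assert (Cplus (Z (fun _ => RtoC 0) j) (Cmult (Copp (RtoC 1)) (Z (fun _ => RtoC 0) j)) = RtoC 0).
  { ring. }
  congruence.
Qed.

Lemma plin_trunc Z : plin Z -> forall K w j, Z (trunc K w) j = rsum (fun m => Cmult (w m) (Z (ev m) j)) K.
Proof.
  intros H K w j. induction K.
  - change (trunc 0 w) with (fun _ : nat => RtoC 0). apply plin_zero; auto.
  - change (trunc (S K) w) with (fun p => Cplus (trunc K w p) (Cmult (w K) (ev K p))).
    rewrite H. rewrite IHK. reflexivity.
Qed.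

Lemma bop_plin X : bounded_op X -> forall g h l, is_l2 g -> is_l2 h -> forall j,
  X (fun p => Cplus (g p) (Cmult l (h p))) j = Cplus (X g j) (Cmult l (X h j)).
Proof. intros [_ [H _]] g h l Hg Hh j. rewrite H; auto. Qed.

Lemma bop_zero X : bounded_op X -> forall j, X (fun _ => RtoC 0) j = RtoC 0.
Proof.
  intros HX j. assert (Hz : is_l2 (fun _ : nat => RtoC 0)) by (apply (l2_zero_tail _ O); auto).
  assert (E := bop_plin X HX (fun _ => RtoC 0) (fun _ => RtoC 0) (Copp (RtoC 1)) Hz Hz j).
  assert (Ef : (fun p : nat => Cplus (RtoC 0) (Cmult (Copp (RtoC 1)) (RtoC 0))) = (fun _ => RtoC 0)).
  { apply functional_extensionality; intros; ring. }
  cbv beta in E; rewrite Ef in E.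
  assert (Cplus (X (fun _ => RtoC 0) j) (Cmult (Copp (RtoC 1)) (X (fun _ => RtoC 0) j)) = RtoC 0).
  { ring. }
  congruence.
Qed.

Lemma bop_trunc X : bounded_op X -> forall K w j, X (trunc K w) j = rsum (fun m => Cmult (w m) (X (ev m) j)) K.
Proof.
  intros H K w j. induction K.
  - change (trunc 0 w) with (fun _ : nat => RtoC 0). apply bop_zero; auto.
  - change (trunc (S K) w) with (fun p => Cplus (trunc K w p) (Cmult (w K) (ev K p))).
    rewrite bop_plin; auto. rewrite IHK. reflexivity. apply l2_trunc. apply l2_ev.
Qed.

Lemma bop_bound X : bounded_op X -> exists M, (0 <= M)%R /\ forall a, is_l2 a -> (l2norm (X a) <= M * l2norm a)%R.
Proof.
  intros [_ [_ [M HM]]]. exists (Rabs M). split. apply Rabs_pos.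
  intros a Ha. eapply Rle_trans. apply HM; auto. apply Rmult_le_compat_r. apply l2norm_ge0.
  apply RRle_abs.
Qed.

Lemma bop_l2 X : bounded_op X -> forall a, is_l2 a -> is_l2 (X a).
Proof. intros [H _]. exact H. Qed.

Lemma X_eq_Z X Z : bounded_op X -> plin Z -> plocal Z -> (forall m, X (ev m) = Z (ev m)) ->
  forall w, is_l2 w -> X w = Z w.
Proof.
  intros HX HZ HZl Hev w Hw. apply functional_extensionality. intro j.
  destruct (bop_bound X HX) as [M [HM0 HM]].
  set (d := Cminus (X w j) (Z w j)).
  assert (Cmod d = 0%R).
  { apply (zero_of_small _ M). apply Cmod_ge_0. auto.
    intros eps Heps.
    destruct (tail_small w Hw eps Heps (S j)) as [K [HK Ht]].
    assert (E1 : X w j = Cplus (X (trunc K w) j) (Cmult (RtoC 1) (X (tail K w) j))).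
    { rewrite <- bop_plin; auto. rewrite <- trunc_tail. reflexivity. apply l2_trunc. apply l2_tail; auto. }
    assert (E2 : X (trunc K w) j = Z w j).
    { rewrite (bop_trunc X HX K w j).
      rewrite (rsum_ext _ (fun m => Cmult (w m) (Z (ev m) j))) by (intros; rewrite Hev; reflexivity).
      rewrite <- (plin_trunc Z HZ K w j). apply HZl. apply trunc_agree. lia. }
    assert (d = X (tail K w) j) by (unfold d; rewrite E1, E2; unfold Cminus; ring).
    rewrite H. eapply Rle_trans. apply coord_bound. apply bop_l2; auto. apply l2_tail; auto.
    eapply Rle_trans. apply HM. apply l2_tail; auto. apply Rmult_le_compat_l; auto. }
  apply Cmod_eq_0 in H. unfold d in H. 
  assert (X w j = Cplus (Cminus (X w j) (Z w j)) (Z w j)) by (unfold Cminus; ring).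
  rewrite H0, H. ring.
Qed.

End Ops.

Section D.
Variable n : nat.
Variable b : nat -> C.
Hypothesis hb : forall t : nat, (n <= t)%nat -> b t = RtoC 0.

Lemma Xhat_plin alpha : plin (Xhat b alpha).
Proof. intros g h l j. apply Xhat_lin. Qed.
Lemma Xhat_plocal alpha : plocal (Xhat b alpha).
Proof. intros j v w H. apply Xhat_local; auto. Qed.
Lemma toep_plin alpha : plin (toeplitz alpha).
Proof. intros g h l j. apply cauchy_lin. Qed.
Lemma toep_plocal alpha : plocal (toeplitz alpha).
Proof. intros j v w H. apply toeplitz_local; auto. Qed.

Lemma Xhat_ev alpha m j :
  Xhat b alpha (ev m) j = fcoord b (cauchy_prod alpha (fpoly b m)) j.
Proof. unfold Xhat. rewrite Ustar_ev. reflexivity. Qed.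

Lemma backward X (hX : bounded_op X) alpha N
  (HN : forall m j : nat,
          N (ev m) j = Cminus (fcoord b (cauchy_prod alpha (fpoly b m)) j) (alpha_idx alpha j m))
  (HD : forall a : seqC, is_l2 a -> X a = (fun j => Cplus (toeplitz alpha a j) (N a j))) :
  forall a : seqC, is_l2 a -> X (Sshift b a) = Sshift b (X a).
Proof.
  assert (Hev : forall m, X (ev m) = Xhat b alpha (ev m)).
  { intros m. rewrite HD by apply l2_ev. apply functional_extensionality. intros j.
    rewrite HN, Xhat_ev. unfold toeplitz. rewrite cauchy_ev. unfold Cminus. ring. }
  assert (HXe := X_eq_Z X (Xhat b alpha) hX (Xhat_plin alpha) (Xhat_plocal alpha) Hev).
  intros a Ha. rewrite HXe by (apply (l2_S n b hb); auto). rewrite HXe by auto.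
  apply Xhat_S.
Qed.

Lemma ev_S k : ev (S k) = Mz (ev k).
Proof.
  apply functional_extensionality. intros p. unfold ev. destruct p; simpl; reflexivity.
Qed.

Lemma ev_decomp m : ev m = (fun p => Cplus (fcoord b (ev m) p) (Cmult (b m) (fcoord b (ev (S m)) p))).
Proof.
  apply functional_extensionality. intros p. rewrite <- fcoord_lin.
  transitivity (fcoord b (Ustar b (ev m)) p). rewrite fcoord_Ustar; reflexivity. rewrite Ustar_ev. f_equal.
  apply functional_extensionality. intros q. unfold fpoly, ev.
  destruct (Nat.eqb_spec q m); destruct (Nat.eqb_spec q (S m)); try lia; subst; ring.
Qed.

Lemma forward_ev X (hX : bounded_op X)
  (H : forall a : seqC, is_l2 a -> X (Sshift b a) = Sshift b (X a)) :
  forall m, X (ev m) = Xhat b (Ustar b (X (fcoord b (ev O)))) (ev m).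
Proof.
  set (c := fcoord b (ev O)). set (alpha := Ustar b (X c)).
  assert (P : forall k, X (fcoord b (ev k)) = Xhat b alpha (fcoord b (ev k))).
  { induction k.
    - unfold Xhat. rewrite Ustar_fcoord.
      assert (E : cauchy_prod alpha (ev O) = alpha).
      { apply functional_extensionality; intros j. rewrite cauchy_ev. unfold alpha_idx.
        simpl. rewrite Nat.sub_0_r. reflexivity. }
      rewrite E. unfold alpha. rewrite fcoord_Ustar. reflexivity.
    - assert (E : fcoord b (ev (S k)) = Sshift b (fcoord b (ev k))).
      { unfold Sshift, Uop. rewrite Ustar_fcoord, ev_S. reflexivity. }
      rewrite E. rewrite H. rewrite IHk. rewrite Xhat_S. reflexivity.
      apply (l2_fcoord n b hb), l2_ev. }
  intros m. fold c. fold alpha.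
  rewrite (ev_decomp m). apply functional_extensionality. intros j.
  rewrite bop_plin; auto. rewrite Xhat_lin. rewrite !P. reflexivity.
  apply (l2_fcoord n b hb), l2_ev. apply (l2_fcoord n b hb), l2_ev.
Qed.

Definition Nop (alpha : seqC) : op := fun a j => Cminus (Xhat b alpha a j) (toeplitz alpha a j).

Lemma Nop_plin alpha : plin (Nop alpha).
Proof. intros g h l j. unfold Nop. rewrite Xhat_lin. unfold toeplitz. rewrite cauchy_lin. unfold Cminus. ring. Qed.
Lemma Nop_plocal alpha : plocal (Nop alpha).
Proof. intros j v w Hv. unfold Nop. rewrite (Xhat_local b alpha j v w Hv), (toeplitz_local alpha j v w Hv). reflexivity. Qed.

Lemma Nop_ev alpha m j : Nop alpha (ev m) j = Cminus (fcoord b (cauchy_prod alpha (fpoly b m)) j) (alpha_idx alpha j m).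
Proof. unfold Nop. rewrite Xhat_ev. unfold toeplitz. rewrite cauchy_ev. reflexivity. Qed.

Lemma Nop_ev_big alpha m j : (n <= m)%nat -> Nop alpha (ev m) j = RtoC 0.
Proof.
  intros Hm. unfold Nop, Xhat. rewrite Ustar_ev.
  assert (E : fpoly b m = ev m).
  { apply functional_extensionality; intros q. unfold fpoly, ev.
    destruct (Nat.eqb_spec q m); auto. destruct (Nat.eqb_spec q (S m)); [apply hb; lia | reflexivity]. }
  rewrite E. rewrite (fcoord_id n b hb). unfold toeplitz. unfold Cminus. ring.
  intros p Hp. rewrite cauchy_ev. unfold alpha_idx. destruct (Nat.leb_spec m p). lia. reflexivity.
Qed.

Lemma Nop_repr alpha a j : Nop alpha a j = rsum (fun m => Cmult (a m) (Nop alpha (ev m) j)) n.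
Proof.
  rewrite (Nop_plocal alpha j a (trunc (max n (S j)) a)).
  rewrite plin_trunc by apply Nop_plin. apply rsum_zero_tail. intros m Hm. rewrite Nop_ev_big by auto. ring. lia.
  intros i Hi. symmetry. apply (trunc_agree (max n (S j)) a j). lia. auto.
Qed.

Lemma l2_alpha_idx alpha m : is_l2 alpha -> is_l2 (fun j => alpha_idx alpha j m).
Proof.
  intros Ha. induction m.
  - apply (l2_ext alpha). intros j. unfold alpha_idx. simpl. rewrite Nat.sub_0_r. reflexivity. auto.
  - apply (l2_ext (Mz (fun j => alpha_idx alpha j m))). 2: apply l2_Mz; auto.
    intros j. destruct j; simpl. unfold alpha_idx. reflexivity. unfold alpha_idx. simpl. reflexivity.
Qed.

Lemma Nop_bounded alpha : is_l2 alpha -> (forall m, is_l2 (Xhat b alpha (ev m))) -> bounded_op (Nop alpha).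
Proof.
  intros Ha Hx.
  assert (Hcol : forall m, is_l2 (Nop alpha (ev m))).
  { intros m. apply (l2_ext (fun j => Cplus (Xhat b alpha (ev m) j) (Cmult (Copp (RtoC 1)) (alpha_idx alpha j m)))).
    intros j. unfold Nop, toeplitz. rewrite cauchy_ev. unfold Cminus. ring.
    apply l2_lin; auto. apply l2_alpha_idx; auto. }
  set (f := fun j => rsumR (fun m => Cmod (Nop alpha (ev m) j)) n).
  assert (Hf : rl2 f). { apply (rl2_rsumR (fun m j => Cmod (Nop alpha (ev m) j))). intros m. apply Hcol. }
  assert (Hf0 : forall j, (0 <= f j)%R). { intros j. apply rsumR_ge0. intros; apply Cmod_ge_0. }
  assert (Hbd : forall a, is_l2 a -> forall j, (Cmod (Nop alpha a j) <= l2norm a * f j)%R).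
  { intros a Hal j. rewrite Nop_repr. unfold f. generalize n. induction n0; simpl.
    - rewrite Cmod_0. rewrite Rmult_0_r. lra.
    - eapply Rle_trans. apply Cmod_triangle. rewrite Cmod_mult.
      pose proof (coord_bound a n0 Hal). pose proof (Cmod_ge_0 (Nop alpha (ev n0) j)).
      pose proof (Cmod_ge_0 (a n0)). nra. }
  split; [|split].
  - intros a Hal. apply (proj1 (l2norm_bound (Nop alpha a) f (l2norm a) (Hbd a Hal) (l2norm_ge0 a) Hf0 Hf)).
  - intros a c l _ _. apply functional_extensionality. intros j. apply Nop_plin.
  - exists (sqrt (Series (fun j => f j ^ 2))). intros a Hal.
    rewrite Rmult_comm. apply (proj2 (l2norm_bound (Nop alpha a) f (l2norm a) (Hbd a Hal) (l2norm_ge0 a) Hf0 Hf)).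
Qed.

End D.

Lemma Cseries_norm (a : nat -> C) s (f : nat -> R) Ss :
  is_series a s -> (forall j, Cmod (a j) <= f j)%R -> is_series f Ss -> (Cmod s <= Ss)%R.
Proof.
  intros Ha Hf HS.
  assert (Hp : forall N, (Cmod (sum_n a N) <= sum_n f N)%R).
  { induction N. rewrite !sum_O. apply Hf. rewrite !sum_Sn.
    change (plus (sum_n a N) (a (S N))) with (Cplus (sum_n a N) (a (S N))).
    change (plus (sum_n f N) (f (S N))) with (Rplus (sum_n f N) (f (S N))).
    eapply Rle_trans. apply Cmod_triangle. specialize (Hf (S N)). lra. }
  assert (Hl : is_lim_seq (fun N => Cmod (sum_n a N)) (Cmod s)).
  { unfold is_lim_seq. eapply filterlim_comp. apply Ha. apply (filterlim_norm (K:=C_AbsRing) (V:=C_NormedModule) s). }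
  assert (Hl2 : is_lim_seq (sum_n f) Ss) by exact HS.
  pose proof (is_lim_seq_le _ _ _ _ Hp Hl Hl2). simpl in H. exact H.
Qed.

Lemma Cmod_pow_n (z : C) k : Cmod (pow_n z k) = (Cmod z ^ k)%R.
Proof.
  induction k; simpl. apply Cmod_1.
  change (mult z (pow_n z k)) with (Cmult z (pow_n z k)). rewrite Cmod_mult, IHk. reflexivity.
Qed.

Lemma pow_bound_le x m D : (0 <= x)%R -> (0 <= m)%R -> (forall k, x ^ k <= D * m ^ k)%R -> (x <= m)%R.
Proof.
  intros Hx Hm H. destruct (Rle_or_lt x m) as [|Hlt]; auto. exfalso.
  assert (Hmp : (0 < m)%R).
  { destruct (Req_dec m 0); [|lra]. subst.
    assert (H1 := H 1%nat). assert (H2 := H 2%nat). simpl in *.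
    assert (D * 0 = 0)%R by ring. nra. }
  set (t := (x / m - 1)%R).
  assert (Ht : (0 < t)%R). { unfold t. apply Rlt_0_minus. apply (Rmult_lt_reg_r m); auto.
     unfold Rdiv. rewrite Rmult_assoc, Rinv_l by lra. lra. }
  assert (Hb : forall k, (1 + INR k * t <= (x/m) ^ k)%R).
  { induction k. simpl. lra. rewrite S_INR. simpl.
    assert (x / m = 1 + t)%R by (unfold t; ring). rewrite H0 in *.
    assert (0 <= INR k * t)%R by (apply Rmult_le_pos; [apply pos_INR|lra]). nra. }
  assert (Hq : forall k, ((x/m) ^ k <= D)%R).
  { intros k. specialize (H k). unfold Rdiv. rewrite Rpow_mult_distr.
    apply (Rmult_le_reg_r (m ^ k)). apply pow_lt; auto.
    rewrite Rmult_assoc, <- Rpow_mult_distr, Rinv_l, pow1 by lra. lra. }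
  destruct (INR_archimed t D Ht) as [k Hk].
  specialize (Hb k). specialize (Hq k). lra.
Qed.

Section ES.
Variable z : C.
Hypothesis Hz : (Cmod z < 1)%R.

Definition ES (g : seqC) (s : C) := is_series (fun j => Cmult (g j) (pow_n z j)) s.

Lemma ES_unique g s t : ES g s -> ES g t -> s = t.
Proof.
  intros H1 H2. apply (filterlim_locally_unique (F:=eventually) _ _ _ H1 H2).
Qed.

Lemma ES_ext g h s : (forall j, g j = h j) -> ES g s -> ES h s.
Proof. intros H. unfold ES. apply is_series_ext. intros j. rewrite H. reflexivity. Qed.

Lemma ES_lin g h s t l : ES g s -> ES h t -> ES (fun j => Cplus (g j) (Cmult l (h j))) (Cplus s (Cmult l t)).
Proof.
  intros H1 H2. unfold ES.
  assert (H3 := is_series_scal l _ _ H2).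
  assert (H4 := is_series_plus _ _ _ _ H1 H3).
  eapply is_series_ext; [|exact H4]. intros j. simpl.
  change (plus (Cmult (g j) (pow_n z j)) (scal l (Cmult (h j) (pow_n z j))))
    with (Cplus (Cmult (g j) (pow_n z j)) (Cmult l (Cmult (h j) (pow_n z j)))). ring.
Qed.

Lemma ES_bound g A : (forall j, Cmod (g j) <= A)%R -> exists s, ES g s /\ (Cmod s <= A / (1 - Cmod z))%R.
Proof.
  intros H. set (r := Cmod z). assert (Hr0 : (0 <= r)%R) by apply Cmod_ge_0. assert (Hr1 : (r < 1)%R) by exact Hz.
  assert (Hgeom : is_series (fun j => A * r ^ j)%R (A * / (1 - r))%R).
  { apply (is_series_ext (fun j => scal A (r ^ j))%R). reflexivity.
    apply (@is_series_scal R_AbsRing R_NormedModule). apply is_series_geom. rewrite Rabs_right; lra. }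
  assert (Hn : forall j, (Cmod (Cmult (g j) (pow_n z j)) <= A * r ^ j)%R).
  { intros j. rewrite Cmod_mult, Cmod_pow_n. apply Rmult_le_compat_r. apply pow_le; auto. apply H. }
  assert (Hex : ex_series (fun j => Cmult (g j) (pow_n z j))).
  { apply (@ex_series_le C_AbsRing C_CompleteNormedModule _ (fun j => A * r ^ j)%R). exact Hn.
    eexists; exact Hgeom. }
  destruct Hex as [s Hs]. exists s. split; auto.
  apply (Cseries_norm _ _ _ _ Hs Hn Hgeom).
Qed.

Lemma ES_Mz g s : ES g s -> ES (Mz g) (Cmult z s).
Proof.
  intros H. unfold ES. apply is_series_decr_1.
  assert (H3 := is_series_scal z _ _ H).
  match goal with |- is_series _ ?v => replace v with (scal z s) end.
  - eapply is_series_ext; [|exact H3].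
    intros j. change (Cmult z (Cmult (g j) (pow_n z j)) = Cmult (g j) (Cmult z (pow_n z j))). ring.
  - change (Cmult z s = Cplus (Cmult z s) (Copp (Cmult (RtoC 0) (RtoC 1)))). ring.
Qed.

Lemma ES_eqv g s t : ES g s -> s = t -> ES g t.
Proof. intros H ->. exact H. Qed.

Lemma ES_zero : ES (fun _ => RtoC 0) (RtoC 0).
Proof.
  destruct (ES_bound (fun _ => RtoC 0) 0%R) as [s [Hs Hb]].
  intros; rewrite Cmod_0; lra.
  assert (Cmod s = 0%R). { pose proof (Cmod_ge_0 s). unfold Rdiv in Hb. rewrite Rmult_0_l in Hb. lra. }
  apply Cmod_eq_0 in H. subst. exact Hs.
Qed.

Lemma ES_ev0 : ES (ev O) (RtoC 1).
Proof.
  unfold ES. apply is_series_decr_1.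
  match goal with |- is_series _ ?v => replace v with (RtoC 0) end.
  - eapply is_series_ext; [|exact ES_zero]. intros j. simpl.
    change (Cmult (RtoC 0) (pow_n z j) = Cmult (RtoC 0) (Cmult z (pow_n z j))). ring.
  - change (RtoC 0 = Cplus (RtoC 1) (Copp (Cmult (RtoC 1) (RtoC 1)))). ring.
Qed.

Lemma ES_shift g s k : ES g s -> ES (fun j => alpha_idx g j k) (Cmult (pow_n z k) s).
Proof.
  intros H. induction k.
  - apply (ES_ext g). intros j. unfold alpha_idx. simpl. rewrite Nat.sub_0_r. reflexivity.
    apply (ES_eqv _ s). exact H. change (s = Cmult (RtoC 1) s). ring.
  - apply (ES_ext (Mz (fun j => alpha_idx g j k))).
    intros j. destruct j; unfold alpha_idx; simpl; reflexivity.
    eapply ES_eqv. apply ES_Mz. exact IHk. change (Cmult z (Cmult (pow_n z k) s) = Cmult (Cmult z (pow_n z k)) s). ring.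
Qed.

Lemma ES_ev k : ES (ev k) (pow_n z k).
Proof.
  apply (ES_ext (fun j => alpha_idx (ev O) j k)).
  - intros j. unfold alpha_idx, ev. destruct (Nat.leb_spec k j); destruct (Nat.eqb_spec j k);
    destruct (Nat.eqb_spec (j - k) 0); try lia; reflexivity.
  - eapply ES_eqv. apply ES_shift. apply ES_ev0. change (Cmult (pow_n z k) (RtoC 1) = pow_n z k). ring.
Qed.

Lemma ES_trunc alpha sa (Ha : ES alpha sa) h K :
  ES (trunc K h) (rsum (fun m => Cmult (h m) (pow_n z m)) K) /\ ES (cauchy_prod alpha (trunc K h)) (Cmult sa (rsum (fun m => Cmult (h m) (pow_n z m)) K)).
Proof.
  induction K.
  - split.
    + apply (ES_ext (fun _ => RtoC 0)). intros; reflexivity. exact ES_zero.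
    + apply (ES_ext (fun _ => RtoC 0)).
      intros j. unfold cauchy_prod. rewrite sum_n_rsum. change (trunc 0 h) with (fun _ : nat => RtoC 0).
      clear. generalize (S j). induction n; simpl. reflexivity. rewrite <- IHn. ring.
      eapply ES_eqv. exact ES_zero. simpl. ring.
  - destruct IHK as [H1 H2].
    change (trunc (S K) h) with (fun p => Cplus (trunc K h p) (Cmult (h K) (ev K p))).
    split.
    + eapply ES_eqv. apply ES_lin. exact H1. apply ES_ev. simpl. reflexivity.
    + apply (ES_ext (fun j => Cplus (cauchy_prod alpha (trunc K h) j) (Cmult (h K) (alpha_idx alpha j K)))).
      intros j. rewrite cauchy_lin. rewrite cauchy_ev. reflexivity.
      eapply ES_eqv. apply ES_lin. exact H2. apply ES_shift. exact Ha. simpl. ring.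
Qed.

Lemma ES_finite alpha sa (Ha : ES alpha sa) g L u :
  (forall j, (L <= j)%nat -> g j = RtoC 0) -> ES g u -> ES (cauchy_prod alpha g) (Cmult sa u).
Proof.
  intros Hg Hu.
  assert (E : g = trunc L g).
  { apply functional_extensionality. intros j. rewrite trunc_val. destruct (Nat.ltb_spec j L); auto.
    }
  destruct (ES_trunc alpha sa Ha g L) as [H1 H2].
  rewrite <- E in H1, H2. rewrite (ES_unique _ _ _ Hu H1). exact H2.
Qed.

End ES.

Section F.
Variable n : nat.
Variable b : nat -> C.
Hypothesis hb : forall t : nat, (n <= t)%nat -> b t = RtoC 0.
Variable X : op.
Hypothesis hX : bounded_op X.
Hypothesis HC : forall a : seqC, is_l2 a -> X (Sshift b a) = Sshift b (X a).

Definition c0 := fcoord b (ev O).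
Definition alpha0 := Ustar b (X c0).

Lemma l2_c0 : is_l2 c0.
Proof. apply (l2_fcoord n b hb), l2_ev. Qed.

Lemma HXe : forall w, is_l2 w -> X w = Xhat b alpha0 w.
Proof.
  apply X_eq_Z; auto. apply Xhat_plin. apply Xhat_plocal. apply (forward_ev n b hb X hX HC).
Qed.

Lemma UX : forall w, is_l2 w -> Ustar b (X w) = cauchy_prod alpha0 (Ustar b w).
Proof. intros w Hw. rewrite HXe by auto. unfold Xhat. apply Ustar_fcoord. Qed.

Lemma UB B : (forall t, Cmod (b t) <= B)%R -> forall v j, is_l2 v -> (Cmod (Ustar b v j) <= (1 + B) * l2norm v)%R.
Proof.
  intros HB v j Hv.
  pose proof (l2norm_ge0 v). assert (0 <= B)%R by (eapply Rle_trans; [apply Cmod_ge_0|apply (HB O)]).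
  destruct j; simpl.
  - pose proof (coord_bound v O Hv). nra.
  - eapply Rle_trans. apply Cmod_triangle. rewrite Cmod_mult.
    pose proof (coord_bound v (S j) Hv). pose proof (coord_bound v j Hv).
    pose proof (HB j). pose proof (Cmod_ge_0 (b j)). pose proof (Cmod_ge_0 (v j)). nra.
Qed.

Section Z.
Variable z : C.
Hypothesis Hz : (Cmod z < 1)%R.
Variable B : R.
Hypothesis HB0 : (0 <= B)%R.
Hypothesis HB : forall t, (Cmod (b t) <= B)%R.
Variable M : R.
Hypothesis HM0 : (0 <= M)%R.
Hypothesis HM : forall a, is_l2 a -> (l2norm (X a) <= M * l2norm a)%R.
Variable sa : C.
Hypothesis Hsa : ES z alpha0 sa.

Lemma ES_Ustar_bound v : is_l2 v -> exists s, ES z (Ustar b v) s /\ (Cmod s <= (1 + B) * l2norm v * / (1 - Cmod z))%R.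
Proof.
  intros Hv. apply ES_bound; auto. intros j. apply UB; auto.
Qed.

Lemma identity w t u : is_l2 w -> ES z (Ustar b (X w)) t -> ES z (Ustar b w) u -> t = Cmult sa u.
Proof.
  intros Hw Ht Hu.
  set (r := Cmod z). assert (Hr0 : (0 <= r)%R) by apply Cmod_ge_0. assert (Hr1 : (r < 1)%R) by exact Hz.
  set (C0 := ((1 + B) * / (1 - r))%R).
  assert (HC0 : (0 <= C0)%R). { unfold C0. apply Rmult_le_pos. lra. apply Rlt_le, Rinv_0_lt_compat. lra. }
  set (d := Cminus t (Cmult sa u)).
  assert (Cmod d = 0%R).
  { apply (zero_of_small _ (C0 * (M + Cmod sa))). apply Cmod_ge_0.
    apply Rmult_le_pos; auto. pose proof (Cmod_ge_0 sa). lra.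
    intros eps Heps.
    destruct (tail_small w Hw eps Heps O) as [K [_ HK]].
    set (wt := trunc K w). set (wl := tail K w).
    assert (Hwt : is_l2 wt) by apply l2_trunc. assert (Hwl : is_l2 wl) by (apply l2_tail; auto).
    assert (Xw : forall j, X w j = Cplus (X wt j) (Cmult (RtoC 1) (X wl j))).
    { intros j. rewrite <- bop_plin; auto. unfold wt, wl. rewrite <- trunc_tail. reflexivity. }
    assert (UXw : forall j, Ustar b (X w) j = Cplus (Ustar b (X wt) j) (Cmult (RtoC 1) (Ustar b (X wl) j))).
    { intros j. rewrite <- Ustar_lin. f_equal. apply functional_extensionality. exact Xw. }
    assert (Uw : forall j, Ustar b w j = Cplus (Ustar b wt j) (Cmult (RtoC 1) (Ustar b wl j))).
    { intros j. rewrite <- Ustar_lin. f_equal. apply trunc_tail. }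
    destruct (ES_Ustar_bound (X wl)) as [e1 [He1 Hb1]]. apply bop_l2; auto.
    destruct (ES_Ustar_bound wl) as [e2 [He2 Hb2]]. auto.
    assert (T1 : ES z (Ustar b (X wt)) (Cplus t (Cmult (Copp (RtoC 1)) e1))).
    { eapply ES_ext; [|apply ES_lin; [exact Ht|exact He1]].
      intros j. simpl. rewrite UXw. ring. }
    assert (T2 : ES z (Ustar b wt) (Cplus u (Cmult (Copp (RtoC 1)) e2))).
    { eapply ES_ext; [|apply ES_lin; [exact Hu|exact He2]].
      intros j. simpl. rewrite Uw. ring. }
    assert (T3 : ES z (Ustar b (X wt)) (Cmult sa (Cplus u (Cmult (Copp (RtoC 1)) e2)))).
    { rewrite UX by auto. apply (ES_finite z Hz alpha0 sa Hsa _ (S K)); auto.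
      intros j Hj. destruct j. lia. simpl. unfold wt. rewrite !trunc_val.
      destruct (Nat.ltb_spec (S j) K); destruct (Nat.ltb_spec j K); try lia. ring. }
    assert (Eq := ES_unique z _ _ _ T1 T3).
    assert (Ed : d = Cminus e1 (Cmult sa e2)).
    { unfold d. assert (t = Cplus (Cmult sa (Cplus u (Cmult (Copp (RtoC 1)) e2))) e1).
      rewrite <- Eq. ring. rewrite H. unfold Cminus. ring. }
    rewrite Ed. unfold Cminus. eapply Rle_trans. apply Cmod_triangle.
    rewrite Cmod_opp, Cmod_mult.
    assert (B1 : (Cmod e1 <= C0 * (M * eps))%R).
    { eapply Rle_trans. exact Hb1. fold r. unfold C0.
      replace ((1 + B) * l2norm (X wl) * / (1 - r))%R with ((1 + B) * / (1 - r) * l2norm (X wl))%R by ring.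
      apply Rmult_le_compat_l. fold C0; auto.
      eapply Rle_trans. apply HM; auto. apply Rmult_le_compat_l; auto. }
    assert (B2 : (Cmod e2 <= C0 * eps)%R).
    { eapply Rle_trans. exact Hb2. fold r. unfold C0.
      replace ((1 + B) * l2norm wl * / (1 - r))%R with ((1 + B) * / (1 - r) * l2norm wl)%R by ring.
      apply Rmult_le_compat_l. fold C0; auto. auto. }
    pose proof (Cmod_ge_0 sa). 
    assert (Cmod sa * Cmod e2 <= Cmod sa * (C0 * eps))%R by (apply Rmult_le_compat_l; auto).
    nra. }
  apply Cmod_eq_0 in H. unfold d in H.
  assert (t = Cplus (Cminus t (Cmult sa u)) (Cmult sa u)) by (unfold Cminus; ring).
  rewrite H0, H. ring.
Qed.

Fixpoint iterX (k : nat) : seqC := match k with O => c0 | S k => X (iterX k) end.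

Lemma iterX_l2 k : is_l2 (iterX k).
Proof. induction k; simpl. apply l2_c0. apply bop_l2; auto. Qed.

Lemma iterX_norm k : (l2norm (iterX k) <= M ^ k * l2norm c0)%R.
Proof.
  induction k; simpl. lra. eapply Rle_trans. apply HM, iterX_l2.
  rewrite Rmult_assoc. apply Rmult_le_compat_l; auto.
Qed.

Lemma iterX_ES k : ES z (Ustar b (iterX k)) (pow_n sa k).
Proof.
  induction k.
  - simpl. unfold c0. rewrite Ustar_fcoord. apply ES_ev0; auto.
  - destruct (ES_Ustar_bound (X (iterX k))) as [t [Ht _]]. apply bop_l2; auto; apply iterX_l2.
    simpl. rewrite (identity (iterX k) t (pow_n sa k) (iterX_l2 k) Ht IHk) in Ht. exact Ht.
Qed.

Lemma sa_bound : (Cmod sa <= M)%R.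
Proof.
  apply (pow_bound_le _ _ ((1 + B) * l2norm c0 * / (1 - Cmod z))%R). apply Cmod_ge_0. auto.
  intros k. destruct (ES_Ustar_bound (iterX k) (iterX_l2 k)) as [s [Hs Hb]].
  rewrite (ES_unique z _ _ _ Hs (iterX_ES k)) in Hb. rewrite Cmod_pow_n in Hb.
  eapply Rle_trans. exact Hb.
  assert (0 < / (1 - Cmod z))%R by (apply Rinv_0_lt_compat; lra).
  pose proof (iterX_norm k).
  replace ((1 + B) * l2norm c0 * / (1 - Cmod z) * M ^ k)%R with ((1 + B) * / (1 - Cmod z) * (M ^ k * l2norm c0))%R by ring.
  replace ((1 + B) * l2norm (iterX k) * / (1 - Cmod z))%R with ((1 + B) * / (1 - Cmod z) * l2norm (iterX k))%R by ring.
  apply Rmult_le_compat_l; auto. apply Rmult_le_pos; lra.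
Qed.

End Z.

Lemma Hinf_alpha0 : Hinf alpha0.
Proof.
  destruct (Bbound n b hb) as [B [HB0 HB]].
  destruct (bop_bound X hX) as [M [HM0 HM]].
  exists M. intros z Hz.
  destruct (ES_Ustar_bound z Hz B HB (X c0)) as [s [Hs _]]. apply bop_l2; auto; apply l2_c0.
  exists s. split. exact Hs. apply (sa_bound z Hz B HB0 HB M HM0 HM s Hs).
Qed.

End F.

Theorem theorem4p5 (n : nat) (hn : (1 <= n)%nat) (b : nat -> C)
    (hb : forall t : nat, (n <= t)%nat -> b t = RtoC 0)
    (X : op) (hX : bounded_op X) :
  (forall a : seqC, is_l2 a -> X (Sshift b a) = Sshift b (X a)) <->
  (exists alpha : seqC, Hinf alpha /\
     exists N : op, bounded_op N /\
       (forall m j : nat,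
          N (ev m) j = Cminus (fcoord b (cauchy_prod alpha (fpoly b m)) j) (alpha_idx alpha j m)) /\
       (forall a : seqC, is_l2 a ->
          X a = (fun j => Cplus (toeplitz alpha a j) (N a j)))).
Proof.
  split.
  - intros HC. exists (alpha0 b X). split. apply (Hinf_alpha0 n b hb X hX HC).
    exists (Nop b (alpha0 b X)). split; [|split].
    + apply (Nop_bounded n b hb).
      * unfold alpha0. apply (l2_Ustar n b hb). apply bop_l2; auto. apply (l2_c0 n b hb).
      * intros m. rewrite <- (HXe n b hb X hX HC) by apply l2_ev. apply bop_l2; auto. apply l2_ev.
    + intros m j. apply Nop_ev.
    + intros a Ha. rewrite (HXe n b hb X hX HC) by auto. apply functional_extensionality. intros j.
      unfold Nop. unfold Cminus. ring.
  - intros [alpha [_ [N [_ [HN HD]]]]]. apply (backward n b hb X hX alpha N HN HD).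
Qed.
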